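(* Let $c>0$ and $\lambda>0$ be constants, let $U\subset(0,T)\times\mathbb{R}^2$ be open, and for each $\varepsilon>0$ let $(\rho^\varepsilon,\Omega^\varepsilon)$, with $\rho^\varepsilon:U\to(0,\infty)$ and $\Omega^\varepsilon:U\to\mathbb{R}^2$, be a $C^1$ solution of the relaxation system $$\partial_t\rho^\varepsilon+\nabla_x\cdot(\rho^\varepsilon\Omega^\varepsilon)=0,\qquad \partial_t(\rho^\varepsilon\Omega^\varepsilon)+c\,\nabla_x\cdot(\rho^\varepsilon\Omega^\varepsilon\otimes\Omega^\varepsilon)+\lambda\nabla_x\rho^\varepsilon=\frac{\rho^\varepsilon}{\varepsilon}\,(1-|\Omega^\varepsilon|^2)\,\Omega^\varepsilon .$$ Suppose that, as $\varepsilon\to0$, $\rho^\varepsilon\to\rho^0$ and $\Omega^\varepsilon\to\Omega^0$ in $C^1_{loc}(U)$ (i.e. the functions and their first derivatives converge locally uniformly), where $\rho^0>0$ on $U$ and $\Omega^0$ vanishes nowhere on $U$. Then $|\Omega^0|=1$ on $U$ and $(\rho^0,\Omega^0)$ solves the macroscopic Vicsek system $$\partial_t\rho^0+\nabla_x\cdot(\rho^0\Omega^0)=0,\qquad \rho^0\big(\partial_t\Omega^0+c\,(\Omega^0\cdot\nabla_x)\Omega^0\big)+\lambda\,(\mathrm{Id}-\Omega^0\otimes\Omega^0)\nabla_x\rho^0=0 .$$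
   Context: $\mathrm{Id}$ is the $2\times2$ identity matrix, $a\otimes b$ the tensor product of vectors, and $\nabla_x\cdot(\rho\Omega\otimes\Omega)$ is the vector with components $\sum_j\partial_{x_j}(\rho\Omega_i\Omega_j)$. *)

(* Defs.v *)
From Stdlib Require Import Reals Lra ClassicalEpsilon.
Open Scope R_scope.

(* Scalar functions of (t, x1, x2). *)
Definition F3 := R -> R -> R -> R.

Definition dt (f : F3) (t x y : R) : R :=
  epsilon (inhabits 0) (fun l => derivable_pt_lim (fun s => f s x y) t l).
Definition dx (f : F3) (t x y : R) : R :=
  epsilon (inhabits 0) (fun l => derivable_pt_lim (fun s => f t s y) x l).
Definition dy (f : F3) (t x y : R) : R :=
  epsilon (inhabits 0) (fun l => derivable_pt_lim (fun s => f t x s) y l).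

Definition in_ball (r t x y t' x' y' : R) : Prop :=
  Rabs (t' - t) < r /\ Rabs (x' - x) < r /\ Rabs (y' - y) < r.

Definition open3 (U : R -> R -> R -> Prop) : Prop :=
  forall t x y, U t x y -> exists r, 0 < r /\
    forall t' x' y', in_ball r t x y t' x' y' -> U t' x' y'.

Definition cont_on (U : R -> R -> R -> Prop) (f : F3) : Prop :=
  forall t x y, U t x y -> forall e, 0 < e -> exists d, 0 < d /\
    forall t' x' y', U t' x' y' -> in_ball d t x y t' x' y' ->
      Rabs (f t' x' y' - f t x y) < e.

Definition C1_on (U : R -> R -> R -> Prop) (f : F3) : Prop :=
  (forall t x y, U t x y ->
     (exists l, derivable_pt_lim (fun s => f s x y) t l) /\
     (exists l, derivable_pt_lim (fun s => f t s y) x l) /\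
     (exists l, derivable_pt_lim (fun s => f t x s) y l)) /\
  cont_on U f /\ cont_on U (dt f) /\ cont_on U (dx f) /\ cont_on U (dy f).

Definition loc_unif_cv (U : R -> R -> R -> Prop) (fe : R -> F3) (f0 : F3) : Prop :=
  forall t x y, U t x y -> exists r, 0 < r /\
    (forall t' x' y', in_ball r t x y t' x' y' -> U t' x' y') /\
    forall e, 0 < e -> exists e0, 0 < e0 /\
      forall eps, 0 < eps < e0 -> forall t' x' y', in_ball r t x y t' x' y' ->
        Rabs (fe eps t' x' y' - f0 t' x' y') < e.

Definition C1loc_cv (U : R -> R -> R -> Prop) (fe : R -> F3) (f0 : F3) : Prop :=
  C1_on U f0 /\
  loc_unif_cv U fe f0 /\
  loc_unif_cv U (fun eps => dt (fe eps)) (dt f0) /\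
  loc_unif_cv U (fun eps => dx (fe eps)) (dx f0) /\
  loc_unif_cv U (fun eps => dy (fe eps)) (dy f0).

(* Main.v *)
Require Import Defs.
From Stdlib Require Import Reals Lra ClassicalEpsilon.
Open Scope R_scope.


Lemma dt_eq f t x y l : derivable_pt_lim (fun s => f s x y) t l -> dt f t x y = l.
Proof. intro H. unfold dt.
  pose proof (epsilon_spec (inhabits 0) (fun l => derivable_pt_lim (fun s => f s x y) t l) (ex_intro _ l H)) as H2.
  exact (uniqueness_limite _ _ _ _ H2 H). Qed.
Lemma dx_eq f t x y l : derivable_pt_lim (fun s => f t s y) x l -> dx f t x y = l.
Proof. intro H. unfold dx.
  pose proof (epsilon_spec (inhabits 0) (fun l => derivable_pt_lim (fun s => f t s y) x l) (ex_intro _ l H)) as H2.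
  exact (uniqueness_limite _ _ _ _ H2 H). Qed.
Lemma dy_eq f t x y l : derivable_pt_lim (fun s => f t x s) y l -> dy f t x y = l.
Proof. intro H. unfold dy.
  pose proof (epsilon_spec (inhabits 0) (fun l => derivable_pt_lim (fun s => f t x s) y l) (ex_intro _ l H)) as H2.
  exact (uniqueness_limite _ _ _ _ H2 H). Qed.

Lemma dt_spec f t x y : (exists l, derivable_pt_lim (fun s => f s x y) t l) ->
  derivable_pt_lim (fun s => f s x y) t (dt f t x y).
Proof. intros [l H]. rewrite (dt_eq _ _ _ _ _ H). exact H. Qed.
Lemma dx_spec f t x y : (exists l, derivable_pt_lim (fun s => f t s y) x l) ->
  derivable_pt_lim (fun s => f t s y) x (dx f t x y).
Proof. intros [l H]. rewrite (dx_eq _ _ _ _ _ H). exact H. Qed.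
Lemma dy_spec f t x y : (exists l, derivable_pt_lim (fun s => f t x s) y l) ->
  derivable_pt_lim (fun s => f t x s) y (dy f t x y).
Proof. intros [l H]. rewrite (dy_eq _ _ _ _ _ H). exact H. Qed.

Lemma dt_mul f g t x y : (exists l, derivable_pt_lim (fun s => f s x y) t l) ->
  (exists l, derivable_pt_lim (fun s => g s x y) t l) ->
  dt (fun t x y => f t x y * g t x y) t x y = dt f t x y * g t x y + f t x y * dt g t x y
  /\ exists l, derivable_pt_lim (fun s => f s x y * g s x y) t l.
Proof. intros H1 H2. apply dt_spec in H1; apply dt_spec in H2.
  pose proof (derivable_pt_lim_mult _ _ _ _ _ H1 H2) as H. split.
  - apply dt_eq. exact H.
  - eexists; exact H. Qed.
Lemma dx_mul f g t x y : (exists l, derivable_pt_lim (fun s => f t s y) x l) ->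
  (exists l, derivable_pt_lim (fun s => g t s y) x l) ->
  dx (fun t x y => f t x y * g t x y) t x y = dx f t x y * g t x y + f t x y * dx g t x y
  /\ exists l, derivable_pt_lim (fun s => f t s y * g t s y) x l.
Proof. intros H1 H2. apply dx_spec in H1; apply dx_spec in H2.
  pose proof (derivable_pt_lim_mult _ _ _ _ _ H1 H2) as H. split.
  - apply dx_eq. exact H.
  - eexists; exact H. Qed.
Lemma dy_mul f g t x y : (exists l, derivable_pt_lim (fun s => f t x s) y l) ->
  (exists l, derivable_pt_lim (fun s => g t x s) y l) ->
  dy (fun t x y => f t x y * g t x y) t x y = dy f t x y * g t x y + f t x y * dy g t x y
  /\ exists l, derivable_pt_lim (fun s => f t x s * g t x s) y l.
Proof. intros H1 H2. apply dy_spec in H1; apply dy_spec in H2.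
  pose proof (derivable_pt_lim_mult _ _ _ _ _ H1 H2) as H. split.
  - apply dy_eq. exact H.
  - eexists; exact H. Qed.

Lemma deriv_loc_const (f : R -> R) x l r C : 0 < r -> derivable_pt_lim f x l ->
  (forall h, Rabs h < r -> f (x + h) = C) -> l = 0.
Proof. intros Hr H Hc. destruct (Req_dec l 0) as [|Hl]; auto. exfalso.
  destruct (H (Rabs l)) as [d Hd]. { apply Rabs_pos_lt; auto. }
  pose (h := Rmin d r / 2).
  assert (Hm : 0 < Rmin d r) by (apply Rmin_pos; [apply cond_pos|auto]).
  assert (Hh : 0 < h) by (unfold h; lra).
  assert (Hh2 : Rabs h < Rmin d r) by (rewrite Rabs_pos_eq; unfold h; lra).
  specialize (Hd h ltac:(lra) ltac:(pose proof (Rmin_l d r); lra)).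
  rewrite (Hc h ltac:(pose proof (Rmin_r d r); lra)) in Hd.
  replace (f x) with C in Hd by (rewrite <- (Hc 0) by (rewrite Rabs_R0; lra); f_equal; ring).
  replace ((C - C) / h - l) with (- l) in Hd by (field; lra).
  rewrite Rabs_Ropp in Hd. lra. Qed.

Definition Dp := fun e : R => 0 < e.

Lemma lim_const a : limit1_in (fun _ => a) Dp a 0.
Proof. exact (limit_free (fun _ => a) Dp 0 0). Qed.
Lemma lim_id : limit1_in (fun e => e) Dp 0 0.
Proof. intros e He. exists e. split; auto. intros z [_ Hz]. exact Hz. Qed.
Lemma lim_ext f g l : limit1_in f Dp l 0 -> (forall e, 0 < e -> f e = g e) -> limit1_in g Dp l 0.
Proof. intros H E e He. destruct (H e He) as [a [Ha Hb]]. exists a; split; auto.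
  intros z [Hz1 Hz2]. rewrite <- E by exact Hz1. apply Hb; auto. Qed.
Lemma lim_uniq f l l' : limit1_in f Dp l 0 -> limit1_in f Dp l' 0 -> l = l'.
Proof. apply single_limit. intros a Ha. exists (a/2). split. unfold Dp; lra.
  unfold Rdist. rewrite Rminus_0_r, Rabs_pos_eq; lra. Qed.

Ltac lim := repeat (apply limit_mul || apply limit_minus || apply limit_plus);
  first [assumption | apply lim_id | apply lim_const].

Lemma luc_pt U fe f0 t x y : loc_unif_cv U fe f0 -> U t x y ->
  limit1_in (fun e => fe e t x y) Dp (f0 t x y) 0.
Proof. intros H HU e He. destruct (H t x y HU) as [r [Hr [_ Hc]]].
  destruct (Hc e He) as [e0 [He0 Hb]]. exists e0. split; [lra|].
  intros z [Hz1 Hz2]. unfold Dp in Hz1. simpl in Hz2. unfold Rdist in Hz2 |- *.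
  rewrite Rminus_0_r, Rabs_pos_eq in Hz2 by lra. apply Hb. lra.
  unfold in_ball; rewrite !Rminus_diag, Rabs_R0; auto. Qed.

Definition ders (f : F3) t x y :=
  (exists l, derivable_pt_lim (fun s => f s x y) t l) /\
  (exists l, derivable_pt_lim (fun s => f t s y) x l) /\
  (exists l, derivable_pt_lim (fun s => f t x s) y l).

Lemma mass_exp r a b t x y : ders r t x y -> ders a t x y -> ders b t x y ->
  dt r t x y + dx (fun t x y => r t x y * a t x y) t x y + dy (fun t x y => r t x y * b t x y) t x y
  = dt r t x y + (dx r t x y * a t x y + r t x y * dx a t x y)
     + (dy r t x y * b t x y + r t x y * dy b t x y).
Proof. intros [r1 [r2 r3]] [a1 [a2 a3]] [b1 [b2 b3]].
  rewrite (proj1 (dx_mul r a t x y r2 a2)), (proj1 (dy_mul r b t x y r3 b3)). reflexivity. Qed.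

Lemma mom1_exp c lambda r a b t x y : ders r t x y -> ders a t x y -> ders b t x y ->
     dt (fun t x y => r t x y * a t x y) t x y
     + c * (dx (fun t x y => r t x y * a t x y * a t x y) t x y
            + dy (fun t x y => r t x y * a t x y * b t x y) t x y)
     + lambda * dx r t x y
  = (dt r t x y * a t x y + r t x y * dt a t x y)
    + c * (((dx r t x y * a t x y + r t x y * dx a t x y) * a t x y + r t x y * a t x y * dx a t x y)
       + ((dy r t x y * a t x y + r t x y * dy a t x y) * b t x y + r t x y * a t x y * dy b t x y))
    + lambda * dx r t x y.
Proof. intros [r1 [r2 r3]] [a1 [a2 a3]] [b1 [b2 b3]].
  rewrite (proj1 (dt_mul r a t x y r1 a1)).
  destruct (dx_mul r a t x y r2 a2) as [E1 X1].
  destruct (dy_mul r a t x y r3 a3) as [E2 X2].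
  rewrite (proj1 (dx_mul (fun t x y => r t x y * a t x y) a t x y X1 a2)).
  rewrite (proj1 (dy_mul (fun t x y => r t x y * a t x y) b t x y X2 b3)).
  rewrite E1, E2. reflexivity. Qed.

Lemma mom2_exp c lambda r a b t x y : ders r t x y -> ders a t x y -> ders b t x y ->
     dt (fun t x y => r t x y * b t x y) t x y
     + c * (dx (fun t x y => r t x y * b t x y * a t x y) t x y
            + dy (fun t x y => r t x y * b t x y * b t x y) t x y)
     + lambda * dy r t x y
  = (dt r t x y * b t x y + r t x y * dt b t x y)
    + c * (((dx r t x y * b t x y + r t x y * dx b t x y) * a t x y + r t x y * b t x y * dx a t x y)
       + ((dy r t x y * b t x y + r t x y * dy b t x y) * b t x y + r t x y * b t x y * dy b t x y))
    + lambda * dy r t x y.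
Proof. intros [r1 [r2 r3]] [a1 [a2 a3]] [b1 [b2 b3]].
  rewrite (proj1 (dt_mul r b t x y r1 b1)).
  destruct (dx_mul r b t x y r2 b2) as [E1 X1].
  destruct (dy_mul r b t x y r3 b3) as [E2 X2].
  rewrite (proj1 (dx_mul (fun t x y => r t x y * b t x y) a t x y X1 a2)).
  rewrite (proj1 (dy_mul (fun t x y => r t x y * b t x y) b t x y X2 b3)).
  rewrite E1, E2. reflexivity. Qed.

Definition Mexp (r a b : F3) t x y :=
  dt r t x y + (dx r t x y * a t x y + r t x y * dx a t x y)
     + (dy r t x y * b t x y + r t x y * dy b t x y).
Definition E1exp c lambda (r a b : F3) t x y :=
  (dt r t x y * a t x y + r t x y * dt a t x y)
    + c * (((dx r t x y * a t x y + r t x y * dx a t x y) * a t x y + r t x y * a t x y * dx a t x y)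
       + ((dy r t x y * a t x y + r t x y * dy a t x y) * b t x y + r t x y * a t x y * dy b t x y))
    + lambda * dx r t x y.
Definition E2exp c lambda (r a b : F3) t x y :=
  (dt r t x y * b t x y + r t x y * dt b t x y)
    + c * (((dx r t x y * b t x y + r t x y * dx b t x y) * a t x y + r t x y * b t x y * dx a t x y)
       + ((dy r t x y * b t x y + r t x y * dy b t x y) * b t x y + r t x y * b t x y * dy b t x y))
    + lambda * dy r t x y.

Theorem proposition3p1
  (c lambda T : R) (U : R -> R -> R -> Prop)
  (rho O1 O2 : R -> F3) (rho0 O10 O20 : F3)
  (Hc : 0 < c) (Hl : 0 < lambda)
  (HUo : open3 U)
  (HUsub : forall t x y, U t x y -> 0 < t < T)
  (Hreg : forall eps, 0 < eps -> C1_on U (rho eps) /\ C1_on U (O1 eps) /\ C1_on U (O2 eps))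
  (Hpos : forall eps, 0 < eps -> forall t x y, U t x y -> 0 < rho eps t x y)
  (Hmass : forall eps, 0 < eps -> forall t x y, U t x y ->
     dt (rho eps) t x y
     + dx (fun t x y => rho eps t x y * O1 eps t x y) t x y
     + dy (fun t x y => rho eps t x y * O2 eps t x y) t x y = 0)
  (Hmom1 : forall eps, 0 < eps -> forall t x y, U t x y ->
     dt (fun t x y => rho eps t x y * O1 eps t x y) t x y
     + c * (dx (fun t x y => rho eps t x y * O1 eps t x y * O1 eps t x y) t x y
            + dy (fun t x y => rho eps t x y * O1 eps t x y * O2 eps t x y) t x y)
     + lambda * dx (rho eps) t x y
     = rho eps t x y / eps * (1 - (O1 eps t x y ^ 2 + O2 eps t x y ^ 2)) * O1 eps t x y)
  (Hmom2 : forall eps, 0 < eps -> forall t x y, U t x y ->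
     dt (fun t x y => rho eps t x y * O2 eps t x y) t x y
     + c * (dx (fun t x y => rho eps t x y * O2 eps t x y * O1 eps t x y) t x y
            + dy (fun t x y => rho eps t x y * O2 eps t x y * O2 eps t x y) t x y)
     + lambda * dy (rho eps) t x y
     = rho eps t x y / eps * (1 - (O1 eps t x y ^ 2 + O2 eps t x y ^ 2)) * O2 eps t x y)
  (Hcvr : C1loc_cv U rho rho0)
  (Hcv1 : C1loc_cv U O1 O10)
  (Hcv2 : C1loc_cv U O2 O20)
  (Hpos0 : forall t x y, U t x y -> 0 < rho0 t x y)
  (Hnz0 : forall t x y, U t x y -> ~ (O10 t x y = 0 /\ O20 t x y = 0)) :
  forall t x y, U t x y ->
    sqrt (O10 t x y ^ 2 + O20 t x y ^ 2) = 1 /\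
    dt rho0 t x y
      + dx (fun t x y => rho0 t x y * O10 t x y) t x y
      + dy (fun t x y => rho0 t x y * O20 t x y) t x y = 0 /\
    rho0 t x y * (dt O10 t x y
                  + c * (O10 t x y * dx O10 t x y + O20 t x y * dy O10 t x y))
      + lambda * (dx rho0 t x y
                  - O10 t x y * (O10 t x y * dx rho0 t x y + O20 t x y * dy rho0 t x y)) = 0 /\
    rho0 t x y * (dt O20 t x y
                  + c * (O10 t x y * dx O20 t x y + O20 t x y * dy O20 t x y))
      + lambda * (dy rho0 t x y
                  - O20 t x y * (O10 t x y * dx rho0 t x y + O20 t x y * dy rho0 t x y)) = 0.
Proof.
  destruct Hcvr as [C0r [Lr [Lrt [Lrx Lry]]]].
  destruct Hcv1 as [C01 [L1 [L1t [L1x L1y]]]].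
  destruct Hcv2 as [C02 [L2 [L2t [L2x L2y]]]].
  assert (PT: forall t x y, U t x y ->
     Mexp rho0 O10 O20 t x y = 0 /\
     E1exp c lambda rho0 O10 O20 t x y * O20 t x y - E2exp c lambda rho0 O10 O20 t x y * O10 t x y = 0 /\
     rho0 t x y * (1 - (O10 t x y * O10 t x y + O20 t x y * O20 t x y)) * O10 t x y = 0 /\
     rho0 t x y * (1 - (O10 t x y * O10 t x y + O20 t x y * O20 t x y)) * O20 t x y = 0).
  { intros t x y HU.
    pose proof (luc_pt _ _ _ t x y Lr HU) as l1.
    pose proof (luc_pt _ _ _ t x y Lrt HU) as l2.
    pose proof (luc_pt _ _ _ t x y Lrx HU) as l3.
    pose proof (luc_pt _ _ _ t x y Lry HU) as l4.
    pose proof (luc_pt _ _ _ t x y L1 HU) as l5.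
    pose proof (luc_pt _ _ _ t x y L1t HU) as l6.
    pose proof (luc_pt _ _ _ t x y L1x HU) as l7.
    pose proof (luc_pt _ _ _ t x y L1y HU) as l8.
    pose proof (luc_pt _ _ _ t x y L2 HU) as l9.
    pose proof (luc_pt _ _ _ t x y L2t HU) as l10.
    pose proof (luc_pt _ _ _ t x y L2x HU) as l11.
    pose proof (luc_pt _ _ _ t x y L2y HU) as l12.
    cbv beta in l1, l2, l3, l4, l5, l6, l7, l8, l9, l10, l11, l12.
    assert (Heps: forall e, 0 < e -> ders (rho e) t x y /\ ders (O1 e) t x y /\ ders (O2 e) t x y).
    { intros e He. destruct (Hreg e He) as [[A _] [[B _] [C _]]]. unfold ders.
      split; [apply A|split;[apply B|apply C]]; exact HU. }
    assert (LM : limit1_in (fun e => Mexp (rho e) (O1 e) (O2 e) t x y) Dp (Mexp rho0 O10 O20 t x y) 0)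
      by (unfold Mexp; lim).
    assert (LE1 : limit1_in (fun e => E1exp c lambda (rho e) (O1 e) (O2 e) t x y) Dp (E1exp c lambda rho0 O10 O20 t x y) 0)
      by (unfold E1exp; lim).
    assert (LE2 : limit1_in (fun e => E2exp c lambda (rho e) (O1 e) (O2 e) t x y) Dp (E2exp c lambda rho0 O10 O20 t x y) 0)
      by (unfold E2exp; lim).
    assert (HE1 : forall e, 0 < e -> E1exp c lambda (rho e) (O1 e) (O2 e) t x y =
       rho e t x y / e * (1 - (O1 e t x y ^ 2 + O2 e t x y ^ 2)) * O1 e t x y).
    { intros e He. destruct (Heps e He) as [d1 [d2 d3]]. unfold E1exp.
      rewrite <- (mom1_exp c lambda _ _ _ t x y d1 d2 d3). apply Hmom1; auto. }
    assert (HE2 : forall e, 0 < e -> E2exp c lambda (rho e) (O1 e) (O2 e) t x y =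
       rho e t x y / e * (1 - (O1 e t x y ^ 2 + O2 e t x y ^ 2)) * O2 e t x y).
    { intros e He. destruct (Heps e He) as [d1 [d2 d3]]. unfold E2exp.
      rewrite <- (mom2_exp c lambda _ _ _ t x y d1 d2 d3). apply Hmom2; auto. }
    split; [|split; [|split]].
    - apply (lim_uniq _ _ _ LM). apply lim_ext with (fun _ => 0). apply lim_const.
      intros e He. destruct (Heps e He) as [d1 [d2 d3]]. unfold Mexp.
      rewrite <- (mass_exp _ _ _ t x y d1 d2 d3). symmetry; apply Hmass; auto.
    - assert (A : limit1_in (fun e => E1exp c lambda (rho e) (O1 e) (O2 e) t x y * O2 e t x y
          - E2exp c lambda (rho e) (O1 e) (O2 e) t x y * O1 e t x y) Dp
          (E1exp c lambda rho0 O10 O20 t x y * O20 t x y - E2exp c lambda rho0 O10 O20 t x y * O10 t x y) 0) by lim.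
      apply (lim_uniq _ _ _ A). apply lim_ext with (fun _ => 0). apply lim_const.
      intros e He. rewrite HE1, HE2 by exact He. ring.
    - assert (A : limit1_in (fun e => rho e t x y * (1 - (O1 e t x y * O1 e t x y + O2 e t x y * O2 e t x y)) * O1 e t x y) Dp
          (rho0 t x y * (1 - (O10 t x y * O10 t x y + O20 t x y * O20 t x y)) * O10 t x y) 0)  by lim.
      assert (B : limit1_in (fun e => e * E1exp c lambda (rho e) (O1 e) (O2 e) t x y) Dp
          (0 * E1exp c lambda rho0 O10 O20 t x y) 0) by lim.
      rewrite Rmult_0_l in B. apply (lim_uniq _ _ _ A). eapply lim_ext. exact B.
      intros e He. cbv beta. rewrite HE1 by exact He. field. lra.
    - assert (A : limit1_in (fun e => rho e t x y * (1 - (O1 e t x y * O1 e t x y + O2 e t x y * O2 e t x y)) * O2 e t x y) Dp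
          (rho0 t x y * (1 - (O10 t x y * O10 t x y + O20 t x y * O20 t x y)) * O20 t x y) 0) by lim.
      assert (B : limit1_in (fun e => e * E2exp c lambda (rho e) (O1 e) (O2 e) t x y) Dp
          (0 * E2exp c lambda rho0 O10 O20 t x y) 0) by lim.
      rewrite Rmult_0_l in B. apply (lim_uniq _ _ _ A). eapply lim_ext. exact B.
      intros e He. cbv beta. rewrite HE2 by exact He. field. lra. }
  assert (Hn : forall t x y, U t x y -> O10 t x y * O10 t x y + O20 t x y * O20 t x y = 1).
  { intros t x y HU. destruct (PT t x y HU) as [_ [_ [N1 N2]]]. pose proof (Hpos0 t x y HU).
    destruct (Req_dec (O10 t x y) 0) as [Z|Z].
    - assert (O20 t x y <> 0) by (intro; apply (Hnz0 t x y HU); auto).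
      apply Rmult_integral in N2 as [N2|N2]; [|contradiction]. apply Rmult_integral in N2 as [|N2]; lra.
    - apply Rmult_integral in N1 as [N1|N1]; [|contradiction]. apply Rmult_integral in N1 as [|N1]; lra. }
  intros t x y HU.
  destruct (PT t x y HU) as [M [X _]].
  pose proof (Hn t x y HU) as N.
  destruct C0r as [Dr _]. destruct C01 as [D1 _]. destruct C02 as [D2 _].
  pose proof (Dr t x y HU) as dr. pose proof (D1 t x y HU) as da. pose proof (D2 t x y HU) as db.
  destruct dr as [r1 [r2 r3]]. destruct da as [a1 [a2 a3]]. destruct db as [b1 [b2 b3]].
  destruct (HUo t x y HU) as [r [Hr Hb]].
  assert (Nt : O10 t x y * dt O10 t x y + O20 t x y * dt O20 t x y = 0).
  { pose proof (derivable_pt_lim_plus _ _ _ _ _ (derivable_pt_lim_mult _ _ _ _ _ (dt_spec _ _ _ _ a1) (dt_spec _ _ _ _ a1)) (derivable_pt_lim_mult _ _ _ _ _ (dt_spec _ _ _ _ b1) (dt_spec _ _ _ _ b1))) as H.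
    pose proof (deriv_loc_const _ _ _ r 1 Hr H) as Z.
    cut (dt O10 t x y * O10 t x y + O10 t x y * dt O10 t x y + (dt O20 t x y * O20 t x y + O20 t x y * dt O20 t x y) = 0). { intro; nra. }
    apply Z. intros h Hh. unfold plus_fct, mult_fct. apply Hn, Hb. unfold in_ball.
    replace (t + h - t) with h by ring. rewrite !Rminus_diag, Rabs_R0. lra. }
  assert (Nx : O10 t x y * dx O10 t x y + O20 t x y * dx O20 t x y = 0).
  { pose proof (derivable_pt_lim_plus _ _ _ _ _ (derivable_pt_lim_mult _ _ _ _ _ (dx_spec _ _ _ _ a2) (dx_spec _ _ _ _ a2)) (derivable_pt_lim_mult _ _ _ _ _ (dx_spec _ _ _ _ b2) (dx_spec _ _ _ _ b2))) as H.
    pose proof (deriv_loc_const _ _ _ r 1 Hr H) as Z.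
    cut (dx O10 t x y * O10 t x y + O10 t x y * dx O10 t x y + (dx O20 t x y * O20 t x y + O20 t x y * dx O20 t x y) = 0). { intro; nra. }
    apply Z. intros h Hh. unfold plus_fct, mult_fct. apply Hn, Hb. unfold in_ball.
    replace (x + h - x) with h by ring. rewrite !Rminus_diag, Rabs_R0. lra. }
  assert (Ny : O10 t x y * dy O10 t x y + O20 t x y * dy O20 t x y = 0).
  { pose proof (derivable_pt_lim_plus _ _ _ _ _ (derivable_pt_lim_mult _ _ _ _ _ (dy_spec _ _ _ _ a3) (dy_spec _ _ _ _ a3)) (derivable_pt_lim_mult _ _ _ _ _ (dy_spec _ _ _ _ b3) (dy_spec _ _ _ _ b3))) as H.
    pose proof (deriv_loc_const _ _ _ r 1 Hr H) as Z.
    cut (dy O10 t x y * O10 t x y + O10 t x y * dy O10 t x y + (dy O20 t x y * O20 t x y + O20 t x y * dy O20 t x y) = 0). { intro; nra. }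
    apply Z. intros h Hh. unfold plus_fct, mult_fct. apply Hn, Hb. unfold in_ball.
    replace (y + h - y) with h by ring. rewrite !Rminus_diag, Rabs_R0. lra. }
  split; [|split; [|split]].
  - replace (O10 t x y ^ 2 + O20 t x y ^ 2) with 1 by (rewrite <- N; ring). exact sqrt_1.
  - rewrite (mass_exp _ _ _ t x y (conj r1 (conj r2 r3)) (conj a1 (conj a2 a3)) (conj b1 (conj b2 b3))).
    exact M.
  - unfold E1exp, E2exp in X.
    set (a := O10 t x y) in *. set (b := O20 t x y) in *. set (q := rho0 t x y) in *.
    set (qt := dt rho0 t x y) in *. set (qx := dx rho0 t x y) in *. set (qy := dy rho0 t x y) in *.
    set (at_ := dt O10 t x y) in *. set (ax := dx O10 t x y) in *. set (ay := dy O10 t x y) in *.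
    set (bt := dt O20 t x y) in *. set (bx := dx O20 t x y) in *. set (by_ := dy O20 t x y) in *.
    transitivity (b * ((qt * a + q * at_ + c * ((qx * a + q * ax) * a + q * a * ax + ((qy * a + q * ay) * b + q * a * by_)) + lambda * qx) * b -
     (qt * b + q * bt + c * ((qx * b + q * bx) * a + q * b * ax + ((qy * b + q * by_) * b + q * b * by_)) + lambda * qy) * a)
      + (q * (at_ + c * (a * ax + b * ay)) + lambda * qx) * (1 - (a * a + b * b))
      + q * a * ((a * at_ + b * bt) + c * (a * (a * ax + b * bx) + b * (a * ay + b * by_)))).
    + ring.
    + rewrite X, N, Nt, Nx, Ny. ring.
  - unfold E1exp, E2exp in X.
    set (a := O10 t x y) in *. set (b := O20 t x y) in *. set (q := rho0 t x y) in *.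
    set (qt := dt rho0 t x y) in *. set (qx := dx rho0 t x y) in *. set (qy := dy rho0 t x y) in *.
    set (at_ := dt O10 t x y) in *. set (ax := dx O10 t x y) in *. set (ay := dy O10 t x y) in *.
    set (bt := dt O20 t x y) in *. set (bx := dx O20 t x y) in *. set (by_ := dy O20 t x y) in *.
    transitivity (- a * ((qt * a + q * at_ + c * ((qx * a + q * ax) * a + q * a * ax + ((qy * a + q * ay) * b + q * a * by_)) + lambda * qx) * b -
     (qt * b + q * bt + c * ((qx * b + q * bx) * a + q * b * ax + ((qy * b + q * by_) * b + q * b * by_)) + lambda * qy) * a)
      + (q * (bt + c * (a * bx + b * by_)) + lambda * qy) * (1 - (a * a + b * b))
      + q * b * ((a * at_ + b * bt) + c * (a * (a * ax + b * bx) + b * (a * ay + b * by_)))).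
    + ring.
    + rewrite X, N, Nt, Nx, Ny. ring.
Qed.
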